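(* Let $\mathcal{M}_1,\mathcal{M}_2$ be matroids on a finite ground set $E$. For any parameters $f,p\in(0,1)$, any arrival order and any values of the auxiliary bits, the sets $S,N_1,N_2$ produced by Marking-Greedy satisfy that $S\cup N_1\cup N_2$ is independent in both $\mathcal{M}_1$ and $\mathcal{M}_2$.
   Context: For $i\in\{1,2\}$, $\bar\imath$ denotes the other index, and $\mathrm{span}_i(T)=\{e\in E:\mathrm{rank}_{\mathcal{M}_i}(T\cup\{e\})=\mathrm{rank}_{\mathcal{M}_i}(T)\}$. Marking-Greedy with parameters $f,p$: elements of $E$ ($m=|E|$) arrive in an order $\pi$; auxiliary bits $\Psi(e)\in\{0,1\}$ are given (in the randomized algorithm, i.i.d. with $\Pr[\Psi(e)=1]=1-p$). Phase (a): start with $S=T=\emptyset$; for each of the first $fm$ arriving elements $e$, if $T\cup\{e\}$ is independent in both matroids, add $e$ to $T$, and if moreover $\Psi(e)=1$ add $e$ to $S$. Phase (b): let $T_f$ be the final $T$, set $N_1=N_2=\emptyset$; for each remaining arriving element $e$ and each $i\in\{1,2\}$: if $e\in\mathrm{span}_i(T_f)$, $e\notin\mathrm{span}_{\bar\imath}(T_f)$, $S\cup N_i\cup\{e\}$ is independent in $\mathcal{M}_i$ and $T_f\cup N_i\cup\{e\}$ is independent in $\mathcal{M}_{\bar\imath}$, then add $e$ to $N_i$. Output $S\cup N_1\cup N_2$. *)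

(* Defs.v *)
From HB Require Import structures.
From mathcomp Require Import all_boot all_order all_algebra.
Set Implicit Arguments. Unset Strict Implicit. Unset Printing Implicit Defensive.
Import Order.TTheory GRing.Theory Num.Theory.

Record matroid (E : finType) := Matroid {
  indep : {set E} -> bool;
  indep0 : indep set0;
  indep_sub : forall A B : {set E}, A \subset B -> indep B -> indep A;
  indep_exch : forall A B : {set E}, indep A -> indep B -> #|A| < #|B| ->
     exists2 e, e \in B :\: A & indep (e |: A)
}.

Section MarkingGreedy.
Variable E : finType.
Implicit Types (M : matroid E) (T : {set E}).

Definition mrank M (A : {set E}) : nat :=
  \max_(B : {set E} | (B \subset A) && indep M B) #|B|.

Definition mspan M T : {set E} :=
  [set e | mrank M (e |: T) == mrank M T].

Definition phaseA (M1 M2 : matroid E) (Psi : E -> bool) (s : seq E)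
  : {set E} * {set E} :=
  foldl (fun (ST : {set E} * {set E}) e =>
           let: (S0, T0) := ST in
           if indep M1 (e |: T0) && indep M2 (e |: T0)
           then ((if Psi e then e |: S0 else S0), e |: T0)
           else (S0, T0))
        (set0, set0) s.

Definition addB (Mi Mo : matroid E) (S0 Tf Ni : {set E}) (e : E) : bool :=
  [&& e \in mspan Mi Tf, e \notin mspan Mo Tf,
      indep Mi (e |: (S0 :|: Ni)) & indep Mo (e |: (Tf :|: Ni))].

Definition phaseB (M1 M2 : matroid E) (S0 Tf : {set E}) (s : seq E)
  : {set E} * {set E} :=
  foldl (fun (NN : {set E} * {set E}) e =>
           let: (N1, N2) := NN in
           let N1' := if addB M1 M2 S0 Tf N1 e then e |: N1 else N1 in
           let N2' := if addB M2 M1 S0 Tf N2 e then e |: N2 else N2 in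
           (N1', N2'))
        (set0, set0) s.

Definition marking_greedy (M1 M2 : matroid E) (Psi : E -> bool)
  (k : nat) (pi : seq E) : {set E} * {set E} * {set E} :=
  let: (S0, Tf) := phaseA M1 M2 Psi (take k pi) in
  let: (N1, N2) := phaseB M1 M2 S0 Tf (drop k pi) in
  (S0, N1, N2).

End MarkingGreedy.

(* Main.v *)
Require Import Defs.
From HB Require Import structures.
From mathcomp Require Import all_boot all_order all_algebra.
Import Order.TTheory GRing.Theory Num.Theory.

Section Aux.
Variable E : finType.
Implicit Types (M : matroid E) (T A N : {set E}).

Lemma mrank_ge M A (B : {set E}) : B \subset A -> indep M B -> #|B| <= mrank M A.
Proof. by move=> sBA iB; rewrite /mrank; apply: (@leq_bigmax_cond _ _ _ B); rewrite sBA iB. Qed.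

Lemma mrank_le M A : mrank M A <= #|A|.
Proof. by apply/bigmax_leqP => B /andP [sBA _]; apply: subset_leq_card. Qed.

Lemma span_dep M T e : indep M T -> e \in mspan M T -> e \notin T ->
  ~~ indep M (e |: T).
Proof.
move=> iT; rewrite inE => /eqP hr eT; apply/negP => ie.
have := @mrank_ge M _ _ (subxx _) ie; rewrite hr.
have := mrank_le M T; rewrite cardsU1 eT /= add1n => h1 h2.
by have := leq_trans h2 h1; rewrite ltnn.
Qed.

Lemma in_span M T e : e \in T -> e \in mspan M T.
Proof. by move=> eT; rewrite inE (setUidPr _) // sub1set. Qed.

Lemma key M T A N : indep M T -> indep M A ->
  (forall a, a \in A -> a \in T \/ ~~ indep M (a |: T)) ->
  indep M (T :|: N) -> [disjoint N & T] -> indep M (A :|: N).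
Proof.
move=> iT iA hA iTN dNT.
have step1 : forall D : {set E}, D \subset A :|: T -> indep M D -> #|D| <= #|T|.
  move=> D sD iD; rewrite leqNgt; apply/negP => lt.
  have [e /setDP [eD eT] ie] := indep_exch iT iD lt.
  have := subsetP sD e eD; rewrite inE (negbTE eT) orbF => eA.
  by case: (hA e eA) => [h|h]; [rewrite h in eT | rewrite ie in h].
pose P1 := fun C : {set E} => [&& A \subset C, C \subset A :|: T & indep M C].
have P1A : P1 A by rewrite /P1 subxx subsetUl iA.
case: (arg_maxnP (fun C : {set E} => #|C|) P1A) => A' /and3P [sAA' sA' iA'] maxA'.
have cA' : #|A'| = #|T|.
  apply/eqP; rewrite eqn_leq step1 //= leqNgt; apply/negP => lt.
  have [e /setDP [eT eA'] ie] := indep_exch iA' iT lt.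
  have : P1 (e |: A') by rewrite /P1 ie (subset_trans sAA' (subsetUr _ _)) subUset sA' sub1set inE eT orbT.
  move/maxA'; rewrite cardsU1 eA' /= add1n ltnn //.
pose P2 := fun C : {set E} => [&& A' \subset C, C \subset A' :|: N & indep M C].
have P2A : P2 A' by rewrite /P2 subxx subsetUl iA'.
case: (arg_maxnP (fun C : {set E} => #|C|) P2A) => C /and3P [sAC sC iC] maxC.
have geC : #|T :|: N| <= #|C|.
  rewrite leqNgt; apply/negP => lt.
  have [e /setDP [eTN eC] ie] := indep_exch iC iTN lt.
  move: eTN; rewrite inE => /orP [eT|eN].
  - have ieA : indep M (e |: A') by apply: indep_sub ie; apply: setUS.
    have := step1 (e |: A'); rewrite ieA cardsU1 cA'.
    have -> : e \notin A' by apply: contra eC; apply: (subsetP sAC).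
    rewrite add1n ltnn.
    have sub : e |: A' \subset A :|: T by rewrite subUset sA' sub1set inE eT orbT.
    by move/(_ sub isT).
  - have : P2 (e |: C) by rewrite /P2 ie (subset_trans sAC (subsetUr _ _)) subUset sC sub1set inE eN orbT.
    by move/maxC; rewrite cardsU1 eC /= add1n ltnn.
have eqC : C = A' :|: N.
  apply/eqP; rewrite eqEcard sC /=; apply: leq_trans geC.
  rewrite cardsU (cardsU T) cA'.
  have -> : #|T :&: N| = 0 by apply/eqP; rewrite cards_eq0 setIC; apply/eqP; apply: disjoint_setI0.
  by rewrite subn0 leq_subr.
by apply: indep_sub iC; rewrite eqC setSU.
Qed.

Definition invA M1 M2 (ST : {set E} * {set E}) :=
  [&& ST.1 \subset ST.2, indep M1 ST.2 & indep M2 ST.2].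

Lemma phaseA_inv M1 M2 Psi s : invA M1 M2 (phaseA M1 M2 Psi s).
Proof.
rewrite /phaseA.
have : invA M1 M2 (set0, set0) by rewrite /invA sub0set !indep0.
move: (set0, set0); elim: s => [|e s IH] [S T] //= H.
apply: IH; case: ifP => [/andP [j1 j2]|_] //.
move: H; rewrite /invA /= => /and3P [sST i1 i2]; rewrite j1 j2 andbT.
by case: (Psi e); rewrite ?setUS // (subset_trans sST (subsetUr _ _)).
Qed.

Definition invB (Mi Mo : matroid E) S0 Tf Ni :=
  [&& indep Mi (S0 :|: Ni), indep Mo (Tf :|: Ni), Ni \subset mspan Mi Tf
    & [disjoint Ni & mspan Mo Tf]].

Lemma invB_step Mi Mo S0 Tf Ni e : invB Mi Mo S0 Tf Ni ->
  invB Mi Mo S0 Tf (if addB Mi Mo S0 Tf Ni e then e |: Ni else Ni).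
Proof.
case: ifP => // /and4P [e1 e2 e3 e4] /and4P [_ _ h3 h4].
rewrite /invB setUCA e3 setUCA e4 /= subUset sub1set e1 h3 /=.
move: h4; rewrite !disjoints_subset subUset sub1set inE => ->; by rewrite e2.
Qed.

Definition invBB M1 M2 S0 Tf (NN : {set E} * {set E}) :=
  invB M1 M2 S0 Tf NN.1 /\ invB M2 M1 S0 Tf NN.2.

Lemma phaseB_inv M1 M2 S0 Tf s :
  invB M1 M2 S0 Tf set0 -> invB M2 M1 S0 Tf set0 ->
  invBB M1 M2 S0 Tf (phaseB M1 M2 S0 Tf s).
Proof.
move=> h1 h2; rewrite /phaseB.
have : invBB M1 M2 S0 Tf (set0, set0) by [].
move: (set0, set0); elim: s => [|e s IH] [N1 N2] //= [H1 H2].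
by apply: IH; split; apply: invB_step.
Qed.

Lemma final (Mi Mo : matroid E) (S0 Tf Ni No : {set E}) : S0 \subset Tf -> indep Mi Tf ->
  invB Mi Mo S0 Tf Ni -> invB Mo Mi S0 Tf No -> indep Mi (S0 :|: Ni :|: No).
Proof.
move=> sST iT /and4P [a1 _ a3 _] /and4P [_ b2 _ b4].
have iT2 := iT; apply: key iT a1 _ b2 _.
- move=> a; rewrite inE => /orP [aS|aN]; first by left; apply: (subsetP sST).
  case: (boolP (a \in Tf)) => aT; [by left | right].
  by apply: span_dep iT2 _ aT; apply: (subsetP a3).
- apply: disjointWr b4; apply/subsetP => x; exact: in_span.
Qed.

End Aux.

Local Open Scope ring_scope.

Theorem lemma6 (R : archiRealFieldType) (E : finType) (M1 M2 : matroid E)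
  (f p : R) (hf : 0 < f < 1) (hp : 0 < p < 1)
  (pi : seq E) (hpi : perm_eq pi (enum E)) (Psi : E -> bool) :
  let m := #|E| in
  let k := Num.truncn (f * m%:R) in
  let: (S0, N1, N2) := marking_greedy M1 M2 Psi k pi in
  indep M1 (S0 :|: N1 :|: N2) /\ indep M2 (S0 :|: N1 :|: N2).
Proof.
move=> m k; rewrite /marking_greedy.
have := @phaseA_inv E M1 M2 Psi (take k pi).
case: (phaseA M1 M2 Psi (take k pi)) => S0 Tf; rewrite /invA /= => /and3P [sST i1 i2].
have iS1 : indep M1 S0 by apply: indep_sub i1.
have iS2 : indep M2 S0 by apply: indep_sub i2.
have h1 : @invB E M1 M2 S0 Tf set0 by rewrite /invB !setU0 iS1 i2 sub0set disjoints_subset sub0set.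
have h2 : @invB E M2 M1 S0 Tf set0 by rewrite /invB !setU0 iS2 i1 sub0set disjoints_subset sub0set.
have := @phaseB_inv E M1 M2 S0 Tf (drop k pi) h1 h2.
case: (phaseB M1 M2 S0 Tf (drop k pi)) => N1 N2 [H1 H2].
split; first exact: (@final E _ _ _ _ _ _ sST i1 H1 H2).
by rewrite setUAC; exact: (@final E _ _ _ _ _ _ sST i2 H2 H1).
Qed.
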